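(* For integers $k\ge 1$, $n\ge 0$ and $j\in\{-1,0,1\}$ let $$h_{n,k}(j)=\sum _{i=0}^n (-1)^{i-1+j} \binom{n}{i} F_{i-j} (k+1)^{n-i}.$$ Then for all integers $k,n\ge 1$ and $m\ge 1$ the following identities hold (writing $h_{t}(j)$ for $h_{t,k}(j)$): (1) $h_{n}(1) (h_{m}(1) h_{n}(1) - h_{m+n}(1)) + h_{n}(0)^2 h_{m}(-1)=h_{n}(0) (h_{m+n}(0) - 2 h_{m}(0) h_{n}(1))$; (2) $h_{m+n}(0) (h_{n}(1) + h_{n}(-1))= 2 h_{m}(0) (h_{n}(0)^2 + h_{n}(1) h_{n}(-1)) + h_{n}(0) (2 h_{m}(1) h_{n}(1) - h_{m+n}(1) + 2 h_{m}(-1) h_{n}(-1) - h_{m+n}(-1))$; (3) $h_{n}(0)^2 h_{m}(1) + h_{n}(-1) (h_{m}(-1) h_{n}(-1) - h_{m+n}(-1))= h_{n}(0) (h_{m+n}(0) - 2 h_{m}(0) h_{n}(-1))$; (4) $h_{n+1}(0)^2 + h_{n+1}(1)^2= h_{n}(0)^2 (1+(1+k)^2) + (1+k)^2 h_{n}(1)^2 + h_{n}(-1)^2 + 2(1+k) h_{n}(0)(h_{n}(1) + h_{n}(-1))$; (5) $h_{n}(1)^3 = h_{n}(0) h_{2n}(0) + h_{n}(1) h_{2n}(1) - h_{n}(0)^2 (2 h_{n}(1) + h_{n}(-1))$; (6) $2 h_{n}(0)^3= h_{2n}(0) (h_{n}(1) + h_{n}(-1)) + h_{n}(0) (-2 h_{n}(1)^2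 + h_{2n}(1) - 2 h_{n}(1) h_{n}(-1) - 2 h_{n}(-1)^2 + h_{2n}(-1))$; (7) $h_{n}(1)^2 h_{2n}(1)= h_{n}(0)^4 + h_{n}(1)^4 - h_{n}(0) h_{2n}(0) (h_{n}(1) + h_{n}(-1)) + h_{n}(0)^2 (3 h_{n}(1)^2- h_{2n}(1) + 2 h_{n}(1) h_{n}(-1) + h_{n}(-1)^2)$; (8) $2 h_{n}(0)^2 h_{2n}(0)= 4 h_{n}(0)^3 (h_{n}(1) + h_{n}(-1)) - h_{2n}(0) (h_{n}(1)^2 + h_{n}(-1)^2) + h_{n}(0) (h_{n}(1) + h_{n}(-1)) (2 h_{n}(1)^2 - h_{2n}(1) + 2 h_{n}(-1)^2 - h_{2n}(-1))$; (9) $h_{n}(1)^3 + h_{3n}(1) + h_{n}(0)^2 (2 h_{n}(1) + h_{n}(-1))=2 (h_{n}(0) h_{2n}(0) + h_{n}(1) h_{2n}(1))$; (10) $h_{2n}(0) (h_{n}(1) + h_{n}(-1))= h_{n}(0)^3 + h_{3n}(0) + h_{n}(0) (h_{n}(1)^2 - h_{2n}(1) + h_{n}(1) h_{n}(-1) + h_{n}(-1)^2 - h_{2n}(-1))$; (11) $h_{n}(1) ( 2 h_{n}(1) h_{2n}(1)-h_{n}(1)^3 - h_{3n}(1))= h_{n}(0)^4 + h_{n}(0)\big(h_{3n}(0) - h_{2n}(0) (3 h_{n}(1) + h_{n}(-1))\big) + h_{n}(0)^2 (3 h_{n}(1)^2 - h_{2n}(1) + 2 h_{n}(1) h_{n}(-1)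 + h_{n}(-1)^2 - h_{2n}(-1))$.
   Context: $F_k$ denotes the Fibonacci numbers, $F_0=0$, $F_1=1$, $F_k=F_{k-1}+F_{k-2}$, extended to negative indices by $F_{-k}=(-1)^{k+1}F_k$ (so $F_{-1}=1$, which is needed for the term $i=0$, $j=1$ in the definition of $h_{n,k}$). *)

(* Defs.v *)
From mathcomp Require Import all_boot all_order all_algebra.
Set Implicit Arguments. Unset Strict Implicit. Unset Printing Implicit Defensive.
Import Order.TTheory GRing.Theory Num.Theory.
Local Open Scope ring_scope.

Fixpoint fib (n : nat) : int :=
  match n with
  | 0%N => 0
  | 1%N => 1
  | (m.+1 as p).+1 => fib p + fib m
  end.

(* Extension to integer indices: F_{-k} = (-1)^(k+1) F_k.
   Negz m denotes -(m+1), so F_{Negz m} = (-1)^(m+2) F_{m+1}. *)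
Definition fibz (z : int) : int :=
  match z with
  | Posz n => fib n
  | Negz m => (-1) ^+ (m.+2) * fib m.+1
  end.

Definition h (k n : nat) (j : int) : int :=
  \sum_(0 <= i < n.+1)
     (-1) ^ (i%:Z - 1 + j) * ('C(n, i))%:R * fibz (i%:Z - j) * ((k.+1)%:R) ^+ (n - i).

(* Main.v *)
Require Import Defs.
From mathcomp Require Import all_boot all_order all_algebra ring zify.
Import Order.TTheory GRing.Theory Num.Theory.
Local Open Scope ring_scope.

Definition S (a : int) (n : nat) (f : nat -> int) : int :=
  \sum_(i < n.+1) ('C(n, i))%:R * f i * a ^+ (n - i).

Lemma S_succ a n f : S a n.+1 f = a * S a n f + S a n (fun i => f i.+1).
Proof.
rewrite /S big_ord_recl /= bin0 subn0.
under eq_bigr => i _ do rewrite /bump /= add1n binS natrD !mulrDl subSS.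
rewrite big_split /= addrA; congr (_ + _).
rewrite big_ord_recr /= bin_small // mul0r mul0r addr0.
rewrite mulr_sumr big_ord_recl /= bin0 subn0.
rewrite exprS mulrCA; congr (_ + _).
apply: eq_bigr => i _; rewrite /bump /= add1n.
have -> : (n - i = (n - i.+1).+1)%N by have := ltn_ord i; lia.
by rewrite exprS; ring.
Qed.

Definition gp (i : nat) : int := if i is j.+1 then fib j else 1.
Definition f0 (i : nat) : int := - (-1) ^+ i * fib i.
Definition f1 (i : nat) : int := (-1) ^+ i * gp i.
Definition fm (i : nat) : int := (-1) ^+ i * fib i.+1.

Lemma sgnz (z : int) : (-1 : int) ^ z = (-1) ^+ `|z|%N.
Proof. by case: z => [m|m] //=; rewrite -exprVn invrN1. Qed.

Ltac fin := cbv beta iota delta [fibz f0 f1 fm gp]; rewrite ?sgnz; cbv beta iota delta [absz]; rewrite ?expr0 ?expr1 ?exprS; ring.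

Lemma hE0 k n : h k n 0 = S (1 + k%:R) n f0.
Proof.
rewrite /h /S big_mkord (_ : k.+1%:R = 1 + k%:R :> int); last by rewrite -add1n natrD.
apply: eq_bigr => i0 _; move: (nat_of_ord i0) => i {i0}.
case: i => [|[|i]]; try fin.
have -> : (i.+2%:Z - 1 + 0 = (i.+1)%:Z) by lia.
have -> : (i.+2%:Z - 0 = (i.+2)%:Z) by lia.
fin.
Qed.

Lemma hE1 k n : h k n 1 = S (1 + k%:R) n f1.
Proof.
rewrite /h /S big_mkord (_ : k.+1%:R = 1 + k%:R :> int); last by rewrite -add1n natrD.
apply: eq_bigr => i0 _; move: (nat_of_ord i0) => i {i0}.
case: i => [|[|i]]; try fin.
have -> : (i.+2%:Z - 1 + 1 = (i.+2)%:Z) by lia.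
have -> : (i.+2%:Z - 1 = (i.+1)%:Z) by lia.
fin.
Qed.

Lemma hEm k n : h k n (-1) = S (1 + k%:R) n fm.
Proof.
rewrite /h /S big_mkord (_ : k.+1%:R = 1 + k%:R :> int); last by rewrite -add1n natrD.
apply: eq_bigr => i0 _; move: (nat_of_ord i0) => i {i0}.
case: i => [|[|i]]; try fin.
have -> : (i.+2%:Z - 1 + -1 = (i)%:Z) by lia.
have -> : (i.+2%:Z - -1 = (i.+3)%:Z) by lia.
fin.
Qed.

Lemma hm k t : h k t (-1) = h k t 1 - h k t 0.
Proof.
rewrite hEm hE1 hE0 /S -sumrB; apply: eq_bigr => i0 _; move: (nat_of_ord i0) => i {i0}.
case: i => [|i]; rewrite /fm /f1 /f0 /gp; first by rewrite /=; ring.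
rewrite [fib i.+2]/=; ring.
Qed.

Lemma hS0 k t : h k t.+1 0 = (1 + k%:R) * h k t 0 + (h k t 1 - h k t 0).
Proof.
rewrite -hm hEm !hE0 S_succ; congr (_ + _); apply: eq_bigr => i _.
by rewrite /f0 /fm exprS; congr (_ * _ * _); ring.
Qed.

Lemma hS1 k t : h k t.+1 1 = (1 + k%:R) * h k t 1 + h k t 0.
Proof.
rewrite !hE1 hE0 S_succ; congr (_ + _); apply: eq_bigr => i _.
by rewrite /f0 /f1 /gp exprS; congr (_ * _ * _); ring.
Qed.

Lemma h00 k : h k 0 0 = 0.
Proof. by rewrite hE0 /S big_ord_recl big_ord0 /f0 /=; ring. Qed.
Lemma h01 k : h k 0 1 = 1.
Proof. rewrite hE1 /S big_ord_recl big_ord0 /f1 /= bin0 subnn !expr0; ring. Qed.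

Lemma hadd k m n :
  h k (m + n) 0 = (h k m 1 - h k m 0) * h k n 0 + h k m 0 * h k n 1 /\
  h k (m + n) 1 = h k m 0 * h k n 0 + h k m 1 * h k n 1.
Proof.
elim: m => [|m [IH0 IH1]]; first by rewrite add0n h00 h01; split; ring.
by rewrite addSn !hS0 !hS1 IH0 IH1; split; ring.
Qed.

Lemma hadd0 k m n : h k (m + n) 0 = (h k m 1 - h k m 0) * h k n 0 + h k m 0 * h k n 1.
Proof. by case: (hadd k m n). Qed.
Lemma hadd1 k m n : h k (m + n) 1 = h k m 0 * h k n 0 + h k m 1 * h k n 1.
Proof. by case: (hadd k m n). Qed.

Theorem proposition7p4 (k n m : nat) :
  (1 <= k)%N -> (1 <= n)%N -> (1 <= m)%N ->
  let H := h k in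
  (
   (* (1) *)
   H n 1 * (H m 1 * H n 1 - H (m + n)%N 1) + H n 0 ^+ 2 * H m (-1)
     = H n 0 * (H (m + n)%N 0 - 2 * H m 0 * H n 1)
   /\ (* (2) *)
   H (m + n)%N 0 * (H n 1 + H n (-1))
     = 2 * H m 0 * (H n 0 ^+ 2 + H n 1 * H n (-1))
       + H n 0 * (2 * H m 1 * H n 1 - H (m + n)%N 1
                  + 2 * H m (-1) * H n (-1) - H (m + n)%N (-1))
   /\ (* (3) *)
   H n 0 ^+ 2 * H m 1 + H n (-1) * (H m (-1) * H n (-1) - H (m + n)%N (-1))
     = H n 0 * (H (m + n)%N 0 - 2 * H m 0 * H n (-1))
   /\ (* (4) *)
   H n.+1 0 ^+ 2 + H n.+1 1 ^+ 2
     = H n 0 ^+ 2 * (1 + (1 + k%:R) ^+ 2) + (1 + k%:R) ^+ 2 * H n 1 ^+ 2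
       + H n (-1) ^+ 2 + 2 * (1 + k%:R) * H n 0 * (H n 1 + H n (-1))
   /\ (* (5) *)
   H n 1 ^+ 3
     = H n 0 * H (2 * n)%N 0 + H n 1 * H (2 * n)%N 1
       - H n 0 ^+ 2 * (2 * H n 1 + H n (-1))
   /\ (* (6) *)
   2 * H n 0 ^+ 3
     = H (2 * n)%N 0 * (H n 1 + H n (-1))
       + H n 0 * (- 2 * H n 1 ^+ 2 + H (2 * n)%N 1 - 2 * H n 1 * H n (-1)
                  - 2 * H n (-1) ^+ 2 + H (2 * n)%N (-1))
   /\ (* (7) *)
   H n 1 ^+ 2 * H (2 * n)%N 1
     = H n 0 ^+ 4 + H n 1 ^+ 4 - H n 0 * H (2 * n)%N 0 * (H n 1 + H n (-1))
       + H n 0 ^+ 2 * (3 * H n 1 ^+ 2 - H (2 * n)%N 1 + 2 * H n 1 * H n (-1)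
                       + H n (-1) ^+ 2)
   /\ (* (8) *)
   2 * H n 0 ^+ 2 * H (2 * n)%N 0
     = 4 * H n 0 ^+ 3 * (H n 1 + H n (-1))
       - H (2 * n)%N 0 * (H n 1 ^+ 2 + H n (-1) ^+ 2)
       + H n 0 * (H n 1 + H n (-1)) * (2 * H n 1 ^+ 2 - H (2 * n)%N 1
                                      + 2 * H n (-1) ^+ 2 - H (2 * n)%N (-1))
   /\ (* (9) *)
   H n 1 ^+ 3 + H (3 * n)%N 1 + H n 0 ^+ 2 * (2 * H n 1 + H n (-1))
     = 2 * (H n 0 * H (2 * n)%N 0 + H n 1 * H (2 * n)%N 1)
   /\ (* (10) *)
   H (2 * n)%N 0 * (H n 1 + H n (-1))
     = H n 0 ^+ 3 + H (3 * n)%N 0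
       + H n 0 * (H n 1 ^+ 2 - H (2 * n)%N 1 + H n 1 * H n (-1)
                  + H n (-1) ^+ 2 - H (2 * n)%N (-1))
   /\ (* (11) *)
   H n 1 * (2 * H n 1 * H (2 * n)%N 1 - H n 1 ^+ 3 - H (3 * n)%N 1)
     = H n 0 ^+ 4
       + H n 0 * (H (3 * n)%N 0 - H (2 * n)%N 0 * (3 * H n 1 + H n (-1)))
       + H n 0 ^+ 2 * (3 * H n 1 ^+ 2 - H (2 * n)%N 1 + 2 * H n 1 * H n (-1)
                       + H n (-1) ^+ 2 - H (2 * n)%N (-1))
  ).
Proof.
move=> _ _ _ H; rewrite /H.
rewrite (_ : (3 * n = n + (n + n))%N); last by lia.
rewrite (_ : (2 * n = n + n)%N); last by lia.
rewrite !hm (hadd0 k m n) (hadd1 k m n) (hadd0 k n (n + n)) (hadd1 k n (n + n)) !(hadd0 k n n) !(hadd1 k n n) !hS0 !hS1.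
clear H. repeat match goal with |- _ /\ _ => split end; ring.
Qed.
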